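(* Let $E>0$ and let $(H_0,H_A,H_B)$ be one of the two choices (a) transverse field: $H_0=E(\sigma_x\otimes I_2+\sigma_y\otimes I_2+I_2\otimes\sigma_x+I_2\otimes\sigma_y)$, $H_A=H_B=E(\sigma_x+\sigma_y)$; (b) longitudinal field: $H_0=E(\sigma_z\otimes I_2+I_2\otimes\sigma_z)$, $H_A=H_B=E\sigma_z$. Let $H_{\mathrm{int}}$ be any Hermitian operator on $\mathbb{C}^2\otimes\mathbb{C}^2$ and $H=H_0+H_{\mathrm{int}}$. Let $\rho$ be a two-qubit density matrix with reduced states $\rho_A=\mathrm{Tr}_B\rho$, $\rho_B=\mathrm{Tr}_A\rho$. If $\mathcal{C}(\rho;H)\ge \mathcal{C}(\rho;H_0)$, then $$\mathcal{C}(\rho_A;H_A)+\mathcal{C}(\rho_B;H_B)\le \mathcal{C}(\rho;H).$$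
   Context: Quantum battery capacity: for a Hermitian $H$ on $\mathbb{C}^d$ with eigenvalues $\epsilon_0\le\epsilon_1\le\dots\le\epsilon_{d-1}$ and a density matrix $\rho$ on $\mathbb{C}^d$ with eigenvalues $\lambda_0\le\lambda_1\le\dots\le\lambda_{d-1}$, $\mathcal{C}(\rho;H)=\sum_{i=0}^{d-1}\epsilon_i(\lambda_i-\lambda_{d-1-i})$. $\sigma_x,\sigma_y,\sigma_z$ are the Pauli matrices and $I_2$ the $2\times 2$ identity. *)

(* Defs.v *)
From HB Require Import structures.
From mathcomp Require Import all_boot all_order all_algebra.
From mathcomp Require Import sesquilinear spectral.
From mathcomp.real_closed Require mxtens.
Set Implicit Arguments. Unset Strict Implicit. Unset Printing Implicit Defensive.
Import Order.TTheory GRing.Theory Num.Theory.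
Local Open Scope ring_scope.

(* Complex scalars: an arbitrary numeric closed field C (e.g. complex R for a
   real closed field R, in particular the complex numbers). *)

Definition eigs {C : numClosedFieldType} {d : nat} (A : 'M[C]_d) : seq C :=
  sort <=%R (sval (closed_field_poly_normal (char_poly A))).

Definition capacity {C : numClosedFieldType} {d : nat} (rho H : 'M[C]_d) : C :=
  \sum_(i < d) (eigs H)`_i * ((eigs rho)`_i - (eigs rho)`_(d.-1 - i)).

Definition psdmx {C : numClosedFieldType} {d : nat} (A : 'M[C]_d) : Prop :=
  forall v : 'cV[C]_d, 0 <= ((map_mx Num.conj v)^T *m A *m v) 0 0.

Definition density {C : numClosedFieldType} {d : nat} (rho : 'M[C]_d) : Prop :=
  [/\ rho \is hermsymmx, psdmx rho & \tr rho = 1].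

(* Kronecker product on C^2 (x) C^2, index (a,b) |-> 2a+b *)
Definition kron {C : numClosedFieldType} (A B : 'M[C]_2) : 'M[C]_(2 * 2) :=
  mxtens.tensmx A B.

Definition tidx (a b : 'I_2) : 'I_(2 * 2) := mxtens.mxtens_index (a, b).

Definition ptrB {C : numClosedFieldType} (rho : 'M[C]_(2 * 2)) : 'M[C]_2 :=
  \matrix_(a < 2, a' < 2) \sum_(b < 2) rho (tidx a b) (tidx a' b).
Definition ptrA {C : numClosedFieldType} (rho : 'M[C]_(2 * 2)) : 'M[C]_2 :=
  \matrix_(b < 2, b' < 2) \sum_(a < 2) rho (tidx a b) (tidx a b').

Definition mx2 {C : numClosedFieldType} (a b c d : C) : 'M[C]_2 :=
  \matrix_(i < 2, j < 2)
    if (i == 0 :> nat) then (if (j == 0 :> nat) then a else b)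
    else (if (j == 0 :> nat) then c else d).

Definition sigma_x {C : numClosedFieldType} : 'M[C]_2 := mx2 0 1 1 0.
Definition sigma_y {C : numClosedFieldType} : 'M[C]_2 := mx2 0 (- 'i) 'i 0.
Definition sigma_z {C : numClosedFieldType} : 'M[C]_2 := mx2 1 0 0 (-1).
Definition I2 {C : numClosedFieldType} : 'M[C]_2 := 1%:M.

(* Main.v *)
Require Import Defs.
From HB Require Import structures.
From mathcomp Require Import all_boot all_order all_algebra.
From mathcomp Require Import sesquilinear spectral.
From mathcomp.real_closed Require Import mxtens.
From mathcomp Require Import ring.
Import Order.TTheory GRing.Theory Num.Theory.
Local Open Scope ring_scope.
Local Open Scope sesquilinear_scope.
Set Implicit Arguments. Unset Strict Implicit. Unset Printing Implicit Defensive.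

Section S.
Variable C : numClosedFieldType.

Lemma unitary_l n (P : 'M[C]_n) : P \is unitarymx -> P^t* *m P = 1%:M.
Proof.
move=> Pu; rewrite -invmx_unitary // mulVmx //; exact: unitarymx_unit.
Qed.

Lemma herm_spec n (A : 'M[C]_n) : A \is hermsymmx ->
  exists (P : 'M[C]_n) (d : 'rV[C]_n), [/\ P \is unitarymx, d \is a realmx & A = P^t* *m diag_mx d *m P].
Proof.
move=> Ah; exists (spectralmx A), (spectral_diag A); split.
- exact: spectral_unitarymx.
- exact: hermitian_spectral_diag_real.
- rewrite -invmx_unitary ?spectral_unitarymx //.
  by apply/orthomx_spectralP; exact: hermitian_normalmx.
Qed.

Definition dl n (d : 'rV[C]_n) := [seq d 0 i | i <- enum 'I_n].

Lemma charpoly_sim n (A P Q : 'M[C]_n) (d : 'rV[C]_n) :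
  Q *m P = 1%:M -> A = Q *m diag_mx d *m P ->
  char_poly A = \prod_(i < n) ('X - (d 0 i)%:P).
Proof.
move=> QP ->.
have [Qu Pu] := mulmx1_unit QP.
transitivity (char_poly (diag_mx d)); last first.
  by rewrite char_poly_trig ?diag_mx_is_trig //; apply: eq_bigr => i _; rewrite mxE eqxx mulr1n.
rewrite /char_poly /char_poly_mx !map_mxM.
set mQ := map_mx _ Q; set mP := map_mx _ P; set D := map_mx _ (diag_mx d).
have mQP : mQ *m mP = 1%:M by rewrite /mQ /mP -map_mxM QP map_mx1.
have E1 : ('X%:M : 'M[{poly C}]_n) - mQ *m D *m mP = mQ *m ('X%:M - D) *m mP.
  rewrite mulmxBr mulmxBl; congr (_ - _).
  by rewrite (scalar_mxC 'X mQ) -mulmxA mQP mulmx1.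
by rewrite E1 !det_mulmx mulrAC -det_mulmx mQP det1 mul1r.
Qed.
Lemma eigs_perm n (A P Q : 'M[C]_n) (d : 'rV[C]_n) :
  Q *m P = 1%:M -> A = Q *m diag_mx d *m P -> perm_eq (eigs A) (dl d).
Proof.
move=> QP EA; rewrite /eigs; case: closed_field_poly_normal => r /= Hr.
rewrite perm_sort; apply: prod_XsubC_eq.
rewrite (monicP (char_poly_monic A)) scale1r in Hr.
by rewrite -Hr (charpoly_sim QP EA) /dl big_map big_enum.
Qed.

Lemma eigs_sorted n (A P Q : 'M[C]_n) (d : 'rV[C]_n) :
  Q *m P = 1%:M -> A = Q *m diag_mx d *m P -> all (fun x => x \is Num.real) (dl d) ->
  sorted <=%R (eigs A).
Proof.
move=> QP EA Hr; rewrite /eigs; apply: (@sort_sorted_in _ (fun x => x \is Num.real)).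
  by move=> x y xr yr; apply: real_leVge.
have := eigs_perm QP EA; rewrite /eigs perm_sort => /perm_all ->.
exact: Hr.
Qed.
Definition qf n (A : 'M[C]_n) (w : 'rV[C]_n) := (w *m A *m w^t*) 0 0.

Lemma ctK m n (M : 'M[C]_(m, n)) k (N : 'M[C]_(n, k)) : (M *m N)^t* = N^t* *m M^t*.
Proof. by rewrite trmx_mul map_mxM. Qed.

Lemma qf_diag n (A P : 'M[C]_n) (d : 'rV[C]_n) w :
  A = P^t* *m diag_mx d *m P ->
  qf A w = \sum_i d 0 i * ((w *m P^t*) 0 i * ((w *m P^t*) 0 i)^*).
Proof.
move=> ->; rewrite /qf.
have -> : w *m (P^t* *m diag_mx d *m P) *m w^t* =
  (w *m P^t*) *m diag_mx d *m (w *m P^t*)^t*.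
  by rewrite ctK trmxCK !mulmxA.
rewrite mxE; apply: eq_bigr => i _.
by rewrite mul_mx_diag !mxE mulrCA mulrA.
Qed.

Lemma qf_row n (A P : 'M[C]_n) (d : 'rV[C]_n) i :
  P \is unitarymx -> A = P^t* *m diag_mx d *m P -> qf A (row i P) = d 0 i.
Proof.
move=> Pu EA; rewrite (qf_diag _ EA) -row_mul (unitarymxP Pu).
rewrite (bigD1 i) //= big1 ?addr0.
  by rewrite !mxE eqxx /= conjC1 !mulr1.
by move=> j ji; rewrite !mxE eq_sym (negbTE ji) mul0r mulr0.
Qed.

Lemma qf_bounds n (A P : 'M[C]_n) (d : 'rV[C]_n) w lo hi :
  P \is unitarymx -> A = P^t* *m diag_mx d *m P -> (w *m w^t*) 0 0 = 1 ->
  (forall i, lo <= d 0 i <= hi) -> lo <= qf A w <= hi.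
Proof.
move=> Pu EA ww hd; rewrite (qf_diag _ EA).
set z := w *m P^t*.
have zz : \sum_i z 0 i * (z 0 i)^* = 1.
  rewrite -ww.
  have -> : w *m w^t* = z *m z^t* by rewrite /z ctK trmxCK mulmxA -(mulmxA w) unitary_l // mulmx1.
  by rewrite mxE; apply: eq_bigr => i _; rewrite !mxE.
apply/andP; split.
  rewrite -[lo]mulr1 -zz mulr_sumr -subr_ge0 -sumrB sumr_ge0 // => i _.
  rewrite -mulrBl mulr_ge0 ?subr_ge0 ?mul_conjC_ge0 //; by case/andP: (hd i).
rewrite -[hi]mulr1 -zz mulr_sumr -subr_ge0 -sumrB sumr_ge0 // => i _.
rewrite -mulrBl mulr_ge0 ?subr_ge0 ?mul_conjC_ge0 //; by case/andP: (hd i).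
Qed.
Lemma sum4 (F : 'I_(2*2) -> C) : \sum_k F k = \sum_a \sum_b F (tidx a b).
Proof.
rewrite pair_bigA /= (reindex (@mxtens_index 2 2)) /=.
  by apply: eq_bigr => -[a b].
by exists (@mxtens_unindex 2 2) => x _; rewrite ?mxtens_indexK ?mxtens_unindexK.
Qed.

Lemma delta_sum (F : 'I_2 -> C) b : \sum_b' F b' * (b' == b)%:R = F b.
Proof.
rewrite (bigD1 b) //= big1 ?addr0 ?eqxx ?mulr1 // => b' /negbTE ->; by rewrite mulr0.
Qed.

Lemma delta_sum' (F : 'I_2 -> C) b : \sum_b' F b' * (b == b')%:R = F b.
Proof. rewrite -[RHS](delta_sum F b); apply: eq_bigr => b' _; by rewrite eq_sym. Qed.

Lemma tr_ptrB (rho : 'M[C]_(2*2)) (M : 'M[C]_2) :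
  \tr (ptrB rho *m M) = \tr (rho *m tensmx M 1%:M).
Proof.
rewrite /mxtrace sum4; apply: eq_bigr => a _.
rewrite mxE.
under [RHS]eq_bigr => b _ do rewrite mxE sum4.
rewrite exchange_big /=; apply: eq_bigr => a' _.
rewrite !mxE big_distrl /=; apply: eq_bigr => b _.
rewrite -[LHS](delta_sum (fun b' => rho (tidx a b) (tidx a' b') * M a' a) b); apply: eq_bigr => b' _.
by rewrite tensmxE mxE mulrA.
Qed.
Lemma tr_ptrA (rho : 'M[C]_(2*2)) (M : 'M[C]_2) :
  \tr (ptrA rho *m M) = \tr (rho *m tensmx 1%:M M).
Proof.
rewrite /mxtrace sum4 exchange_big /=; apply: eq_bigr => b _.
rewrite mxE.
under [LHS]eq_bigr => b' _ do rewrite mxE big_distrl /=.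
rewrite [LHS]exchange_big /=; apply: eq_bigr => a _.
rewrite mxE sum4 exchange_big /=; apply: eq_bigr => b' _.
rewrite -[LHS](delta_sum (fun a' => rho (tidx a b) (tidx a' b') * M b' b) a).
apply: eq_bigr => a' _.
by rewrite tensmxE !mxE -mulrA [M _ _ * _]mulrC.
Qed.
Lemma tensmxDl m n p q (A B : 'M[C]_(m, n)) (M : 'M[C]_(p, q)) :
  tensmx (A + B) M = tensmx A M + tensmx B M.
Proof. by apply/matrixP => i j; rewrite !mxE mulrDl. Qed.

Lemma tensmxDr m n p q (A : 'M[C]_(m, n)) (M N : 'M[C]_(p, q)) :
  tensmx A (M + N) = tensmx A M + tensmx A N.
Proof. by apply/matrixP => i j; rewrite !mxE mulrDr. Qed.

Lemma tensmx_ct m n p q (A : 'M[C]_(m, n)) (B : 'M[C]_(p, q)) :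
  (tensmx A B)^t* = tensmx (A^t*) (B^t*).
Proof. by rewrite trmx_tens map_mxT. Qed.

Lemma qf_tr n (A : 'M[C]_n) w : qf A w = \tr (A *m (w^t* *m w)).
Proof. by rewrite /qf -trace_mx11 -mulmxA mxtrace_mulC -mulmxA. Qed.

Lemma tens_proj (u v : 'rV[C]_2) :
  (tensmx u v : 'rV_(2*2))^t* *m (tensmx u v : 'rV_(2*2)) = tensmx (u^t* *m u) (v^t* *m v).
Proof. rewrite -tensmx_mul; congr (_ *m _). by apply/matrixP => i j; rewrite !mxE rmorphM. Qed.

Lemma key_id (rho : 'M[C]_(2*2)) (u u' v v' : 'rV[C]_2) :
  u^t* *m u + u'^t* *m u' = 1%:M -> v^t* *m v + v'^t* *m v' = 1%:M ->
  qf (ptrB rho) u - qf (ptrB rho) u' + (qf (ptrA rho) v - qf (ptrA rho) v') =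
  2 * (qf rho (tensmx u v) - qf rho (tensmx u' v')).
Proof.
move=> Hu Hv.
have EB X : \tr (ptrB rho *m X) = \tr (rho *m tensmx X (v^t* *m v + v'^t* *m v')).
  by rewrite Hv tr_ptrB.
have EA X : \tr (ptrA rho *m X) = \tr (rho *m tensmx (u^t* *m u + u'^t* *m u') X).
  by rewrite Hu tr_ptrA.
rewrite !qf_tr !EA !EB !tens_proj !tensmxDl !tensmxDr !mulmxDr !mxtraceD.
set a := \tr _; set b := \tr _; set c := \tr _; set d := \tr _.
by rewrite mulr2n mulrDl mul1r; ring.
Qed.
Lemma tens11 : tensmx (1%:M : 'M[C]_2) (1%:M : 'M[C]_2) = 1%:M.
Proof.
apply/matrixP => i j.
case: (mxtens_indexP i) => a b; case: (mxtens_indexP j) => a' b'.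
rewrite tensmxE !mxE (can_eq (@mxtens_indexK 2 2)) xpair_eqE.
by case: (a == a'); case: (b == b'); rewrite ?mulr1 ?mulr0.
Qed.

Definition evec (x : 'rV[C]_2) : 'rV[C]_(2*2) :=
  \row_k (x 0 (mxtens_unindex k).1 + x 0 (mxtens_unindex k).2).

Lemma diag_tens (x : 'rV[C]_2) :
  tensmx (diag_mx x) 1%:M + tensmx 1%:M (diag_mx x) = diag_mx (evec x).
Proof.
apply/matrixP => i j.
case: (mxtens_indexP i) => a b; case: (mxtens_indexP j) => a' b'.
rewrite !(tensmxE, mxE) (can_eq (@mxtens_indexK 2 2)) xpair_eqE mxtens_indexK /=.
case: eqP => [->|_]; case: eqP => [->|_] //=; rewrite ?mulr1 ?mulr0 ?mul1r ?mul0r ?addr0 //.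
Qed.

Lemma scale_diag n (a : C) (d : 'rV[C]_n) : a *: diag_mx d = diag_mx (a *: d).
Proof. by apply/matrixP => i j; rewrite !mxE mulrnAr. Qed.

Lemma H0_spec (X Q : 'M[C]_2) (x : 'rV[C]_2) (E : C) :
  Q \is unitarymx -> X = Q^t* *m diag_mx x *m Q ->
  tensmx Q Q \is unitarymx /\
  E *: (kron X I2 + kron I2 X) =
   (tensmx Q Q)^t* *m diag_mx (E *: evec x) *m tensmx Q Q.
Proof.
move=> Qu EX; split.
  by apply/unitarymxP; rewrite tensmx_ct tensmx_mul (unitarymxP Qu) tens11.
have I2E : Q^t* *m 1%:M *m Q = (I2 : 'M[C]_2) by rewrite mulmx1 unitary_l.
rewrite -scale_diag -diag_tens -scalemxAr -scalemxAl mulmxDr mulmxDl.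
by rewrite tensmx_ct !tensmx_mul -EX I2E.
Qed.
Lemma sum_proj (P : 'M[C]_2) : P \is unitarymx ->
  (row 0 P)^t* *m row 0 P + (row 1 P)^t* *m row 1 P = 1%:M.
Proof.
move=> Pu; rewrite -(unitary_l Pu); apply/matrixP => i j.
rewrite !mxE !big_ord1 big_ord_recr big_ord1 /= !mxE.
have -> : widen_ord (leqnSn 1) ord0 = 0 :> 'I_2 by apply: val_inj.
have -> : ord_max = 1 :> 'I_2 by apply: val_inj.
by [].
Qed.

Lemma unit_row n (P : 'M[C]_n) i : P \is unitarymx -> (row i P *m (row i P)^t*) 0 0 = 1.
Proof.
move=> Pu; have := congr1 (fun M : 'M[C]_n => M i i) (unitarymxP Pu).
rewrite !mxE eqxx mulr1n => <-; apply: eq_bigr => k _; by rewrite !mxE.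
Qed.

Lemma tens_norm (u v : 'rV[C]_2) :
  ((tensmx u v : 'rV_(2*2)) *m (tensmx u v : 'rV_(2*2))^t*) 0 0 =
  (u *m u^t*) 0 0 * (v *m v^t*) 0 0.
Proof.
rewrite !mxE sum4 big_distrl /=; apply: eq_bigr => a _.
rewrite big_distrr /=; apply: eq_bigr => b _.
rewrite !mxE !mxtens_indexK /=.
set z := Ordinal _; set z' := Ordinal _.
rewrite (ord1 z) (ord1 z') rmorphM; ring.
Qed.
Lemma herm_ij n (A : 'M[C]_n) : A \is hermsymmx -> forall i j, A i j = (A j i)^*.
Proof. by move/is_hermitianmxP => h i j; rewrite [in LHS]h !mxE expr0 mul1r. Qed.

Lemma ij_herm n (A : 'M[C]_n) : (forall i j, A i j = (A j i)^*) -> A \is hermsymmx.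
Proof.
move=> h; apply/is_hermitianmxP; rewrite expr0 scale1r.
by apply/matrixP => i j; rewrite !mxE.
Qed.

Lemma ptrB_herm (rho : 'M[C]_(2*2)) : rho \is hermsymmx -> ptrB rho \is hermsymmx.
Proof.
move=> h; apply: ij_herm => a a'; rewrite !mxE rmorph_sum; apply: eq_bigr => b _.
exact: herm_ij.
Qed.

Lemma ptrA_herm (rho : 'M[C]_(2*2)) : rho \is hermsymmx -> ptrA rho \is hermsymmx.
Proof.
move=> h; apply: ij_herm => a a'; rewrite !mxE rmorph_sum; apply: eq_bigr => b _.
exact: herm_ij.
Qed.

Lemma sxy_herm : (sigma_x + sigma_y : 'M[C]_2) \is hermsymmx.
Proof.
apply: ij_herm => i j; rewrite !mxE.
have c1 : (1 + 'i : C)^* = 1 - 'i by rewrite -{1}(mulr1 'i) conjC_rect ?real1 // mulr1.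
have c2 : (1 - 'i : C)^* = 1 + 'i.
  by rewrite -{1}(mulr1 'i) -mulrN conjC_rect ?real1 ?realN ?real1 // mulrN opprK mulr1.
case: i => [[|[|//]] ?]; case: j => [[|[|//]] ?] /=;
  by rewrite ?(addr0, add0r, conjC0, c1, c2).
Qed.

Lemma sz_herm : (sigma_z : 'M[C]_2) \is hermsymmx.
Proof.
apply: ij_herm => i j; rewrite !mxE.
case: i => [[|[|//]] ?]; case: j => [[|[|//]] ?] /=;
  by rewrite ?(conjC0, conjC1, rmorphN1).
Qed.

Lemma dl2 (x : 'rV[C]_2) : dl x = [:: x 0 0; x 0 1].
Proof.
rewrite /dl !enum_ordSl enum_ord0 /=.
by congr [:: x 0 _; x 0 _]; apply: val_inj.
Qed.

Lemma dl4 (x : 'rV[C]_(2*2)) :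
  dl x = [:: x 0 (tidx 0 0); x 0 (tidx 0 1); x 0 (tidx 1 0); x 0 (tidx 1 1)].
Proof.
rewrite /dl !enum_ordSl enum_ord0 /=.
by congr [:: x 0 _; x 0 _; x 0 _; x 0 _]; apply: val_inj.
Qed.

Lemma swap2 (a b : C) : perm_eq [:: a; b] [:: b; a].
Proof. by rewrite (perm_catC [:: a] [:: b]). Qed.

Lemma pair_case (x0 x1 : C) : x0 \is Num.real -> x1 \is Num.real ->
  exists m M, [/\ m <= M, perm_eq [:: x0; x1] [:: m; M] &
    perm_eq [:: x0 + x0; x0 + x1; x1 + x0; x1 + x1] [:: m + m; m + M; m + M; M + M]].
Proof.
move=> r0 r1; case/orP: (real_leVge r0 r1) => h.
  by exists x0, x1; split => //; rewrite (addrC x1 x0).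
exists x1, x0; split => //; first exact: swap2.
have -> : [:: x1 + x1; x1 + x0; x1 + x0; x0 + x0] = rev [:: x0 + x0; x1 + x0; x1 + x0; x1 + x1] by [].
by rewrite perm_sym perm_rev (addrC x0 x1).
Qed.
Lemma sorted2 (a b : C) : a <= b -> sorted <=%R [:: a; b].
Proof. by move=> h; rewrite /= h. Qed.

Lemma herm2 (A : 'M[C]_2) : A \is hermsymmx ->
  exists u u' : 'rV[C]_2, [/\ u^t* *m u + u'^t* *m u' = 1%:M,
    (u *m u^t*) 0 0 = 1, (u' *m u'^t*) 0 0 = 1 &
    eigs A = [:: qf A u'; qf A u]].
Proof.
move=> Ah; have [P [d [Pu dr EA]]] := herm_spec Ah.
have QP : P^t* *m P = 1%:M by exact: unitary_l.
have so := eigs_sorted QP EA.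
have pe := eigs_perm QP EA; rewrite dl2 in pe so.
have r0 : d 0 0 \is Num.real by apply: (mxOverP dr).
have r1 : d 0 1 \is Num.real by apply: (mxOverP dr).
have so' : sorted <=%R (eigs A) by apply: so; rewrite /= r0 r1.
case/orP: (real_leVge r0 r1) => h.
  exists (row 1 P), (row 0 P); split; rewrite ?unit_row //.
    by rewrite addrC sum_proj.
  rewrite !(qf_row _ Pu EA).
  by apply: le_sorted_eq => //; exact: sorted2.
exists (row 0 P), (row 1 P); split; rewrite ?unit_row //.
  by rewrite sum_proj.
rewrite !(qf_row _ Pu EA).
apply: le_sorted_eq => //; first exact: sorted2.
by rewrite (permPl pe) swap2.
Qed.

Lemma herm4 (A : 'M[C]_(2*2)) : A \is hermsymmx ->
  exists l0 l1 l2 l3, eigs A = [:: l0; l1; l2; l3] /\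
   forall w : 'rV[C]_(2*2), (w *m w^t*) 0 0 = 1 -> l0 <= qf A w <= l3.
Proof.
move=> Ah; have [P [d [Pu dr EA]]] := herm_spec Ah.
have QP : P^t* *m P = 1%:M by exact: unitary_l.
have pe := eigs_perm QP EA.
have so := eigs_sorted QP EA.
have allr : all (fun x => x \is Num.real) (dl d).
  by apply/allP => x /mapP [i _ ->]; apply: (mxOverP dr).
have {}so := so allr.
have sz : size (eigs A) = 4 by rewrite (perm_size pe) /dl size_map size_enum_ord.
have hb : forall i, (eigs A)`_0 <= d 0 i <= (eigs A)`_3.
  move=> i; have : d 0 i \in eigs A by rewrite (perm_mem pe); apply: map_f; rewrite mem_enum.
  case/(nthP 0) => k; rewrite sz => kl <-.
  by rewrite !(le_sorted_leq_nth 0 so) ?inE ?sz //= -ltnS.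
move: sz hb; case E: (eigs A) => [|l0 [|l1 [|l2 [|l3 [|? ?]]]]] //= _ hb.
exists l0, l1, l2, l3; split => // w ww.
exact: (qf_bounds Pu EA ww hb).
Qed.

Lemma cap2 (rho H : 'M[C]_2) e0 e1 l0 l1 :
  eigs H = [:: e0; e1] -> eigs rho = [:: l0; l1] ->
  capacity rho H = (e1 - e0) * (l1 - l0).
Proof.
move=> eH er; rewrite /capacity !big_ord_recr big_ord0 /= eH er /=.
ring.
Qed.

Lemma cap4 (rho H : 'M[C]_(2*2)) e0 e1 e3 l0 l1 l2 l3 :
  eigs H = [:: e0; e1; e1; e3] -> eigs rho = [:: l0; l1; l2; l3] ->
  capacity rho H = (e3 - e0) * (l3 - l0).
Proof.
move=> eH er; rewrite /capacity !big_ord_recr big_ord0 /= eH er /=.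
ring.
Qed.
Lemma main_gen (E : C) (X : 'M[C]_2) (H0 rho : 'M[C]_(2*2)) (HA HB : 'M[C]_2) :
  0 < E -> X \is hermsymmx -> H0 = E *: (kron X I2 + kron I2 X) ->
  HA = E *: X -> HB = E *: X -> rho \is hermsymmx ->
  capacity (ptrB rho) HA + capacity (ptrA rho) HB <= capacity rho H0.
Proof.
move=> E0 Xh -> -> -> rh.
have Er : E \is Num.real by exact: gtr0_real.
have [Q [x [Qu xr EX]]] := herm_spec Xh.
have r0 : x 0 0 \is Num.real by apply: (mxOverP xr).
have r1 : x 0 1 \is Num.real by apply: (mxOverP xr).
have [m [M [mM p2 p4]]] := pair_case r0 r1.
have QP := unitary_l Qu.
have EX' : E *: X = Q^t* *m diag_mx (E *: x) *m Q.
  by rewrite EX scalemxAl scalemxAr scale_diag.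
have eHA : eigs (E *: X) = [:: E * m; E * M].
  apply: le_sorted_eq.
  - apply: (eigs_sorted QP EX'); rewrite dl2 !mxE /=.
    by rewrite !realM.
  - by rewrite /= ler_wpM2l // ltW.
  - rewrite (permPl (eigs_perm QP EX')) dl2 !mxE.
    exact: (perm_map (fun y => E * y) p2).
have [Q2u EH0] := H0_spec E Qu EX.
have QP2 := unitary_l Q2u.
have eH0 : eigs (E *: (kron X I2 + kron I2 X)) =
    [:: E * (m + m); E * (m + M); E * (m + M); E * (M + M)].
  apply: le_sorted_eq.
  - apply: (eigs_sorted QP2 EH0); rewrite dl4 !mxE !mxtens_indexK /=.
    by rewrite !realM ?realD.
  - by rewrite /= !ler_pM2l // lexx lerD2l lerD2r mM.
  - rewrite (permPl (eigs_perm QP2 EH0)) dl4 !mxE !mxtens_indexK /=.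
    exact: (perm_map (fun y => E * y) p4).
have [u [u' [Hu nu nu' eA]]] := herm2 (ptrB_herm rh).
have [v [v' [Hv nv nv' eB]]] := herm2 (ptrA_herm rh).
have [l0 [l1 [l2 [l3 [eR bnd]]]]] := herm4 rh.
rewrite (cap2 eHA eA) (cap2 eHA eB) (cap4 eH0 eR) -mulrDr key_id //.
have n1 : ((tensmx u v : 'rV_(2*2)) *m (tensmx u v : 'rV_(2*2))^t*) 0 0 = 1.
  by rewrite tens_norm nu nv mulr1.
have n2 : ((tensmx u' v' : 'rV_(2*2)) *m (tensmx u' v' : 'rV_(2*2))^t*) 0 0 = 1.
  by rewrite tens_norm nu' nv' mulr1.
have /andP [_ b1] := bnd _ n1.
have /andP [b2 _] := bnd _ n2.
have -> : E * (M + M) - E * (m + m) = (E * M - E * m) * 2 by ring.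
rewrite mulrA; apply: ler_wpM2l.
  by rewrite mulr_ge0 // subr_ge0 ler_wpM2l // ltW.
by apply: lerD => //; rewrite lerN2.
Qed.
End S.

Local Close Scope sesquilinear_scope.

Theorem theorem1 (C : numClosedFieldType) (E : C)
    (H0 Hint rho : 'M[C]_(2 * 2)) (HA HB : 'M[C]_2) :
  0 < E ->
  (  (H0 = E *: (kron sigma_x I2 + kron sigma_y I2 + kron I2 sigma_x + kron I2 sigma_y)
      /\ HA = E *: (sigma_x + sigma_y) /\ HB = E *: (sigma_x + sigma_y))
  \/ (H0 = E *: (kron sigma_z I2 + kron I2 sigma_z)
      /\ HA = E *: sigma_z /\ HB = E *: sigma_z) ) ->
  Hint \is hermsymmx ->
  density rho ->
  capacity rho H0 <= capacity rho (H0 + Hint) ->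
  capacity (ptrB rho) HA + capacity (ptrA rho) HB <= capacity rho (H0 + Hint).
Proof.
move=> E0 hcase _ [rh _ _] hc; apply: le_trans hc.
case: hcase => [[-> [-> ->]] | [-> [-> ->]]].
  apply: (@main_gen C E (sigma_x + sigma_y)) => //; first exact: sxy_herm.
  by rewrite /kron tensmxDl tensmxDr !addrA.
by apply: (@main_gen C E sigma_z) => //; exact: sz_herm.
Qed.
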